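(* Let $\mathbb{F}=\mathbb{H}$, $G=\mathrm{SL}(3,\mathbb{H})$, and let $\epsilon<\tfrac16$. Then the integral $$\int_{\mathbb{H}}\int_{\mathbb{H}}\Phi(n_{y,z})^{-1-\epsilon}\,dy\,dz$$ is divergent.
   Context: $\theta(g)=(g^{-1})^\dagger$ (quaternionic conjugate transpose), $J=\mathrm{diag}(1,-1,-1)$, $\sigma(g)=J\theta(g)J$, $\Phi(g)=\|g\sigma(g)^{-1}\|_{HS}^2\|\sigma(g)g^{-1}\|_{HS}^2$ with $\|X\|_{HS}^2=\sum_{i,j}|X_{ij}|^2$. For $y,z\in\mathbb{H}$, $n_{y,z}=\begin{pmatrix}1&0&z\\0&1&y\\0&0&1\end{pmatrix}$. $dy,dz$ denote Lebesgue measure on $\mathbb{H}\cong\mathbb{R}^4$. *)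

(* Defs.v *)
From HB Require Import structures.
From mathcomp Require Import all_boot all_order all_algebra.
From mathcomp Require Import all_classical all_reals all_analysis.
From Stdlib Require Import ClassicalEpsilon.
Set Implicit Arguments. Unset Strict Implicit. Unset Printing Implicit Defensive.
Import Order.TTheory GRing.Theory Num.Theory.
Local Open Scope ring_scope.

Section Quat.
Variable R : realType.

(* Quaternions H = R^4 : q = q0 + q1 i + q2 j + q3 k *)
Record quat := Quat { q0 : R; q1 : R; q2 : R; q3 : R }.

Definition qzero : quat := Quat 0 0 0 0.
Definition qone : quat := Quat 1 0 0 0.
Definition qadd (p q : quat) : quat :=
  Quat (q0 p + q0 q) (q1 p + q1 q) (q2 p + q2 q) (q3 p + q3 q).
Definition qopp (p : quat) : quat := Quat (- q0 p) (- q1 p) (- q2 p) (- q3 p).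
Definition qmul (p q : quat) : quat :=
  Quat (q0 p * q0 q - q1 p * q1 q - q2 p * q2 q - q3 p * q3 q)
       (q0 p * q1 q + q1 p * q0 q + q2 p * q3 q - q3 p * q2 q)
       (q0 p * q2 q - q1 p * q3 q + q2 p * q0 q + q3 p * q1 q)
       (q0 p * q3 q + q1 p * q2 q - q2 p * q1 q + q3 p * q0 q).
Definition qconj (p : quat) : quat := Quat (q0 p) (- q1 p) (- q2 p) (- q3 p).
Definition qnorm2 (p : quat) : R := q0 p ^+ 2 + q1 p ^+ 2 + q2 p ^+ 2 + q3 p ^+ 2.

Definition qmat := 'I_3 -> 'I_3 -> quat.

Definition mmul (A B : qmat) : qmat :=
  fun i j => \big[qadd/qzero]_(k < 3) qmul (A i k) (B k j).
Definition mid : qmat := fun i j => if i == j then qone else qzero.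
(* the inverse matrix (two-sided); arbitrary if g is not invertible *)
Definition minv (g : qmat) : qmat :=
  epsilon (inhabits g) (fun h => mmul g h = mid /\ mmul h g = mid).
Definition mdag (A : qmat) : qmat := fun i j => qconj (A j i).
Definition Jm : qmat :=
  fun i j => if i == j then (if i == ord0 then qone else qopp qone) else qzero.

Definition theta (g : qmat) : qmat := mdag (minv g).
Definition sigma (g : qmat) : qmat := mmul Jm (mmul (theta g) Jm).
Definition hs2 (X : qmat) : R := \sum_(i < 3) \sum_(j < 3) qnorm2 (X i j).
Definition Phi (g : qmat) : R :=
  hs2 (mmul g (minv (sigma g))) * hs2 (mmul (sigma g) (minv g)).

(* n_{y,z} = [[1,0,z],[0,1,y],[0,0,1]] *)
Definition nyz (y z : quat) : qmat :=
  fun i j =>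
    if i == j then qone
    else if (val i == 0%N) && (val j == 2%N) then z
    else if (val i == 1%N) && (val j == 2%N) then y
    else qzero.

(* Lebesgue integral over H = R^4 of a nonnegative function, written as an
   iterated integral over the four real coordinates (equal to the integral
   against Lebesgue measure on R^4 by Tonelli for nonnegative measurable f). *)
Definition Hint (f : quat -> \bar R) : \bar R :=
  (\int[@lebesgue_measure R]_a \int[@lebesgue_measure R]_b
     \int[@lebesgue_measure R]_c \int[@lebesgue_measure R]_d f (Quat a b c d))%E.

End Quat.

(* Main.v *)
Require Import Defs.
From HB Require Import structures.
From mathcomp Require Import all_boot all_order all_algebra.
From mathcomp Require Import all_classical all_reals all_analysis.
From mathcomp Require Import measurable_realfun.
From mathcomp Require Import ring lra.
From Stdlib Require ClassicalEpsilon.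
Set Implicit Arguments. Unset Strict Implicit. Unset Printing Implicit Defensive.
Import Order.TTheory GRing.Theory Num.Def Num.Theory.
Import numFieldNormedType.Exports.
Local Open Scope ring_scope.
Section G.
Variable R : realType.

Lemma growth (C p : R) : 0 < C -> 0 < 7 + 6 * p ->
  forall M : R, exists r : R, 1 <= r /\ M <= r ^+ 7 / 10 * (C * r ^+ 6) `^ p.
Proof.
move=> C0 d0 M.
set d := 7 + 6 * p in d0.
set K := C `^ p / 10.
have K0 : 0 < K by rewrite /K divr_gt0 // powR_gt0.
set X := `|M| / K.
have X0 : 0 <= X by rewrite /X divr_ge0 // ltW.
exists (maxr 1 (X `^ d^-1)); split; first by rewrite le_max lexx.
set r := maxr 1 _.
have r1 : 1 <= r by rewrite /r le_max lexx.
have r0 : 0 <= r by apply: le_trans r1.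
have rX : X `^ d^-1 <= r by rewrite /r le_max lexx orbT.
have -> : r ^+ 7 / 10 * (C * r ^+ 6) `^ p = K * r `^ d.
  rewrite powRM // ?exprn_ge0 ?(ltW C0) //.
  rewrite /d powRD; last by apply/implyP => _; rewrite gt_eqF // (lt_le_trans ltr01 r1).
  rewrite -[r ^+ 6]powR_mulrn // -powRrM -[r ^+ 7]powR_mulrn //.
  rewrite /K; ring.
have : X <= r `^ d.
  have -> : X = (X `^ d^-1) `^ d by rewrite -powRrM mulVf ?gt_eqF // powRr1.
  apply: ge0_ler_powR => //; first exact: ltW.
  by rewrite nnegrE powR_ge0.
move=> Xr; apply: le_trans (ler_norm M) _.
have -> : `|M| = K * X by rewrite /X mulrC divfK // gt_eqF.
by rewrite ler_pM2l.
Qed.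

Definition PhiF (a b : R) : R :=
  ((a + b) ^+ 2 + 4 * b + 3) * ((1 - a + b) ^+ 2 + 2 * a + 2 * b + 2).

Lemma PhiF_ge1 a b : 0 <= a -> 0 <= b -> 1 <= PhiF a b.
Proof.
move=> a0 b0; rewrite /PhiF.
set X := _ + 3; set Y := _ + 2.
have X1 : 1 <= X by rewrite /X; have := sqr_ge0 (a + b); lra.
have Y1 : 1 <= Y by rewrite /Y; have := sqr_ge0 (1 - a + b); lra.
nra.
Qed.

Lemma PhiF_le (r a b : R) : 1 <= r -> 4 * r ^+ 2 <= a <= 16 * r ^+ 2 -> a <= b <= a + r ->
  PhiF a b <= (10 * 10 * 10 * 10 * 10) * r ^+ 6.
Proof.
move=> r1 /andP[a1 a2] /andP[b1 b2]; rewrite /PhiF.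
have r2 : r <= r ^+ 2 by nra.
have r4 : r ^+ 2 <= r ^+ 4 by nra.
have ab : 0 <= a + b <= 33 * r ^+ 2 by apply/andP; split; nra.
have X1 : (a + b) ^+ 2 <= 1089 * r ^+ 4.
  case/andP: ab => ab1 ab2.
  have -> : r ^+ 4 = r ^+ 2 * r ^+ 2 by rewrite -exprD.
  nra.
have X2 : 4 * b + 3 <= 71 * r ^+ 4 by nra.
have Y1 : (1 - a + b) ^+ 2 <= 4 * r ^+ 2 by nra.
have Y2 : 2 * a + 2 * b + 2 <= 68 * r ^+ 2 by nra.
set X := _ + 3; set Y := _ + 2.
have X0 : 0 <= X by rewrite /X; nra.
have Y0 : 0 <= Y by rewrite /Y; nra.
have XX : X <= 1160 * r ^+ 4 by rewrite /X; lra.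
have YY : Y <= 72 * r ^+ 2 by rewrite /Y; lra.
have -> : r ^+ 6 = r ^+ 4 * r ^+ 2 by rewrite -exprD.
have r40 : 0 <= r ^+ 4 by rewrite exprn_ge0 // (le_trans ler01 r1).
nra.
Qed.

Lemma b_bounds (r a S t : R) : 1 <= r -> 4 * r ^+ 2 <= a <= 16 * r ^+ 2 -> 0 <= S <= 3 * r ^+ 2 ->
  Num.sqrt (a - S) <= t <= Num.sqrt (a - S) + 1 / 10 -> a <= S + t ^+ 2 <= a + r.
Proof.
move=> r1 /andP[a1 a2] /andP[S1 S2] /andP[t1 t2].
have A0 : 0 <= a - S by nra.
set s := Num.sqrt (a - S) in t1 t2.
have s0 : 0 <= s by rewrite sqrtr_ge0.
have ss : s ^+ 2 = a - S by rewrite sqr_sqrtr.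
have s4 : s <= 4 * r by nra.
apply/andP; split; nra.
Qed.
End G.
Section Alg.
Variable R : realType.
Local Notation quat := (quat R).

Definition o0 : 'I_3 := @Ordinal 3 0 isT.
Definition o1 : 'I_3 := @Ordinal 3 1 isT.
Definition o2 : 'I_3 := @Ordinal 3 2 isT.

Lemma ord3P (i : 'I_3) : i = o0 \/ i = o1 \/ i = o2.
Proof.
case: i => [[|[|[|n]]] Hi]; [left|right;left|right;right|done]; exact/val_inj.
Qed.

Lemma quatE (p q : quat) : q0 p = q0 q -> q1 p = q1 q -> q2 p = q2 q -> q3 p = q3 q -> p = q.
Proof. by case: p; case: q => /= ? ? ? ? ? ? ? ? -> -> -> ->. Qed.

Lemma E3 : index_enum 'I_3 = [:: o0; o1; o2].
Proof. have := val_enum_ord 3; rewrite enumT => H; apply: (inj_map val_inj); by rewrite H. Qed.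

Lemma mmulE (A B : qmat R) i j : mmul A B i j =
  qadd (qmul (A i o0) (B o0 j))
    (qadd (qmul (A i o1) (B o1 j)) (qadd (qmul (A i o2) (B o2 j)) (qzero R))).
Proof.
have -> : mmul A B i j = \big[@qadd R/qzero R]_(k < 3) qmul (A i k) (B k j) by [].
by rewrite E3 !big_cons big_nil.
Qed.

Section P.
Variables p q : quat.
Lemma q0D : q0 (qadd p q) = q0 p + q0 q. Proof. by []. Qed.
Lemma q1D : q1 (qadd p q) = q1 p + q1 q. Proof. by []. Qed.
Lemma q2D : q2 (qadd p q) = q2 p + q2 q. Proof. by []. Qed.
Lemma q3D : q3 (qadd p q) = q3 p + q3 q. Proof. by []. Qed.
Lemma q0M : q0 (qmul p q) = q0 p * q0 q - q1 p * q1 q - q2 p * q2 q - q3 p * q3 q. Proof. by []. Qed.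
Lemma q1M : q1 (qmul p q) = q0 p * q1 q + q1 p * q0 q + q2 p * q3 q - q3 p * q2 q. Proof. by []. Qed.
Lemma q2M : q2 (qmul p q) = q0 p * q2 q - q1 p * q3 q + q2 p * q0 q + q3 p * q1 q. Proof. by []. Qed.
Lemma q3M : q3 (qmul p q) = q0 p * q3 q + q1 p * q2 q - q2 p * q1 q + q3 p * q0 q. Proof. by []. Qed.
Lemma q0N : q0 (qopp p) = - q0 p. Proof. by []. Qed.
Lemma q1N : q1 (qopp p) = - q1 p. Proof. by []. Qed.
Lemma q2N : q2 (qopp p) = - q2 p. Proof. by []. Qed.
Lemma q3N : q3 (qopp p) = - q3 p. Proof. by []. Qed.
Lemma q0C : q0 (qconj p) = q0 p. Proof. by []. Qed.
Lemma q1C : q1 (qconj p) = - q1 p. Proof. by []. Qed.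
Lemma q2C : q2 (qconj p) = - q2 p. Proof. by []. Qed.
Lemma q3C : q3 (qconj p) = - q3 p. Proof. by []. Qed.
End P.
Lemma q0Z : q0 (qzero R) = 0. Proof. by []. Qed.
Lemma q1Z : q1 (qzero R) = 0. Proof. by []. Qed.
Lemma q2Z : q2 (qzero R) = 0. Proof. by []. Qed.
Lemma q3Z : q3 (qzero R) = 0. Proof. by []. Qed.
Lemma q0O : q0 (qone R) = 1. Proof. by []. Qed.
Lemma q1O : q1 (qone R) = 0. Proof. by []. Qed.
Lemma q2O : q2 (qone R) = 0. Proof. by []. Qed.
Lemma q3O : q3 (qone R) = 0. Proof. by []. Qed.

Ltac qsimp := rewrite ?(q0D, q1D, q2D, q3D, q0M, q1M, q2M, q3M, q0N, q1N, q2N, q3N,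
   q0C, q1C, q2C, q3C, q0Z, q1Z, q2Z, q3Z, q0O, q1O, q2O, q3O).
Ltac qsolve := apply: quatE; cbn [q0 q1 q2 q3 qadd qmul qopp qconj qzero qone]; ring.

Lemma mmulA (A B C : qmat R) : mmul A (mmul B C) = mmul (mmul A B) C.
Proof.
apply/funext => i; apply/funext => j; rewrite !mmulE.
qsolve.
Qed.

Lemma mmul1 (A : qmat R) : mmul A (mid R) = A.
Proof.
apply/funext => i; apply/funext => j; rewrite !mmulE.
case: (ord3P j) => [->|[->|->]]; rewrite /mid /=; qsolve.
Qed.

Lemma mul1m (A : qmat R) : mmul (mid R) A = A.
Proof.
apply/funext => i; apply/funext => j; rewrite !mmulE.
case: (ord3P i) => [->|[->|->]]; rewrite /mid /=; qsolve.
Qed.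

Lemma minv_eq (g h : qmat R) : mmul g h = mid R -> mmul h g = mid R -> minv g = h.
Proof.
move=> gh hg; rewrite /minv.
have [H1 H2] := ClassicalEpsilon.epsilon_spec (inhabits g) (fun h => mmul g h = mid R /\ mmul h g = mid R)
  (ex_intro _ h (conj gh hg)).
set h' := ClassicalEpsilon.epsilon _ _ in H1 H2 *.
by rewrite -[h']mmul1 -gh mmulA H2 mul1m.
Qed.

Definition mk3 (a b c d e f g h k : quat) : qmat R :=
  fun i j => nth (qzero R) (nth [::] [:: [:: a; b; c]; [:: d; e; f]; [:: g; h; k]] i) j.

Lemma ord3_ind (P : 'I_3 -> Prop) : P o0 -> P o1 -> P o2 -> forall i, P i.
Proof. by move=> ? ? ? i; case: (ord3P i) => [->|[->|->]]. Qed.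
Ltac mx_ext := apply/funext; apply: ord3_ind; apply/funext; apply: ord3_ind.
Ltac mx_red := rewrite ?mmulE; try unfold mdag; cbn [mk3 nth nat_of_ord o0 o1 o2 mdag].

Local Notation "1q" := (qone R).
Local Notation "0q" := (qzero R).

Lemma nyzE y z : nyz y z = mk3 1q 0q z 0q 1q y 0q 0q 1q.
Proof. by mx_ext. Qed.
Lemma midE : mid R = mk3 1q 0q 0q 0q 1q 0q 0q 0q 1q.
Proof. by mx_ext. Qed.
Lemma JmE : Jm R = mk3 1q 0q 0q 0q (qopp 1q) 0q 0q 0q (qopp 1q).
Proof. by mx_ext. Qed.

Lemma PhiE (y z : quat) : Phi (nyz y z) = PhiF (qnorm2 z) (qnorm2 y).
Proof.
have gi : minv (nyz y z) = mk3 1q 0q (qopp z) 0q 1q (qopp y) 0q 0q 1q.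
  by apply: minv_eq; rewrite nyzE midE; mx_ext; mx_red; qsolve.
have sg : sigma (nyz y z) = mk3 1q 0q 0q 0q 1q 0q (qconj z) (qopp (qconj y)) 1q.
  by rewrite /sigma /theta gi JmE; mx_ext; mx_red; qsolve.
have si : minv (sigma (nyz y z)) = mk3 1q 0q 0q 0q 1q 0q (qopp (qconj z)) (qconj y) 1q.
  by apply: minv_eq; rewrite sg midE; mx_ext; mx_red; qsolve.
rewrite /Phi si sg gi nyzE /hs2 E3 !big_cons !big_nil; mx_red.
rewrite /qnorm2 /PhiF; cbn [q0 q1 q2 q3 qadd qmul qopp qconj qzero qone].
ring.
Qed.
End Alg.
Section ge0_le_integral'.
Local Open Scope classical_set_scope.
Local Open Scope ring_scope.
Local Open Scope ereal_scope.
Context d (T : measurableType d) (R : realType).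
Variable mu : {measure set T -> \bar R}.
Variables (D : set T) (mD : measurable D) (f1 f2 : T -> \bar R).
Hypothesis f10 : forall x, D x -> 0 <= f1 x.
Hypothesis mf1 : measurable_fun D f1.

Import HBNNSimple.

Lemma ge0_le_integral' : (forall x, D x -> f1 x <= f2 x) ->
  \int[mu]_(x in D) f1 x <= \int[mu]_(x in D) f2 x.
Proof.
move=> f12; rewrite !(integral_mkcond D).
set h1 := f1 \_ D; set h2 := f2 \_ D.
have h10 x : 0 <= h1 x by apply: erestrict_ge0.
have h20 x : 0 <= h2 x.
  by apply: erestrict_ge0 => // t /[dup] Dt /f12; apply: le_trans; exact: f10.
have mh1 : measurable_fun setT h1 by exact/(measurable_restrictT _ _).1.
have h12 x : h1 x <= h2 x by apply: lee_restrict.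
pose g1 := nnsfun_approx measurableT mh1.
rewrite (@nd_ge0_integral_lim _ _ _ _ _ g1)//; last 2 first.
  by move=> x m n mn; exact/lefP/nd_nnsfun_approx.
  by move=> x; exact: cvg_nnsfun_approx.
apply: lime_le.
  by apply: is_cvg_sintegral => // t m n mn; exact/lefP/nd_nnsfun_approx.
near=> n; rewrite ge0_integralTE//; apply: ereal_sup_ubound => /=.
exists (g1 n) => // t; rewrite (le_trans _ (h12 _))//.
have := leey (h1 t); rewrite le_eqVlt => /predU1P[->|ftoo].
  by rewrite leey.
have h1tfin : h1 t \is a fin_num.
  by rewrite fin_numE gt_eqF/= ?lt_eqF// (lt_le_trans _ (h10 t)).
have /= := @cvg_nnsfun_approx _ _ _ _ measurableT _ mh1 (fun x _ => h10 x) t Logic.I.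
rewrite -(fineK h1tfin) => /fine_cvgP[ft_near].
set u_ := (X in X --> _) => u_h1.
have <- : lim u_ = fine (h1 t) by exact/cvg_lim.
rewrite lee_fin; apply: nondecreasing_cvgn_le.
  by move=> // a b ab; rewrite /u_ /=; exact/lefP/nd_nnsfun_approx.
by apply/cvg_ex; eexists; exact: u_h1.
Unshelve. all: by end_near. Qed.

End ge0_le_integral'.

Section LB.
Local Open Scope classical_set_scope.
Local Open Scope ring_scope.
Variable R : realType.
Local Notation leb := (@lebesgue_measure R).

Lemma L1 (g : R -> \bar R) (lo hi c k : R) :
  (forall x, (0 <= g x)%E) -> lo <= hi -> 0 <= c ->
  (forall x, lo <= x <= hi -> (c%:E <= g x)%E) -> k = (hi - lo) * c ->
  (k%:E <= \int[leb]_x g x)%E.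
Proof.
move=> g0 lh c0 gc ->.
pose D := [set` `[lo, hi]] : set R.
have mD : measurable D by exact: measurable_itv.
have -> : ((hi - lo) * c)%:E = (\int[leb]_(x in D) (cst c%:E) x)%E.
  rewrite integral_cst // /D.
  have E := @lebesgue_measure_itv R `[lo, hi].
  rewrite /= lte_fin in E.
  transitivity (c%:E * (if (lo < hi)%R then (hi%:E - lo%:E) else 0))%E; last first.
    by rewrite -E.
  case: ltgtP lh => //= H _.
    by rewrite -EFinB -EFinM mulrC.
  by rewrite H subrr mul0r mule0.
rewrite integral_mkcond.
apply: ge0_le_integral' => //.
- by move=> x _; rewrite /patch; case: ifP => // _; rewrite lee_fin.
- by apply/(measurable_restrictT _ _).1 => //; exact: measurable_cst.
- move=> x _; rewrite /patch; case: ifPn => // /set_mem; rewrite /D /= in_itv /=.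
  exact: gc.
Qed.

Lemma Hint_lb (f : quat R -> \bar R) (l0 h0 l1 h1 l2 h2 w c : R) (l3 : R -> R -> R -> R) :
  (forall q, 0 <= f q)%E -> l0 <= h0 -> l1 <= h1 -> l2 <= h2 -> 0 <= w -> 0 <= c ->
  (forall a b e d, l0 <= a <= h0 -> l1 <= b <= h1 -> l2 <= e <= h2 ->
     l3 a b e <= d <= l3 a b e + w -> (c%:E <= f (Quat a b e d))%E) ->
  (((h0 - l0) * (h1 - l1) * (h2 - l2) * w * c)%:E <= Hint f)%E.
Proof.
move=> f0 h0l h1l h2l w0 c0 H; rewrite /Hint.
have s0 : 0 <= h0 - l0 by rewrite subr_ge0.
have s1 : 0 <= h1 - l1 by rewrite subr_ge0.
have s2 : 0 <= h2 - l2 by rewrite subr_ge0.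
apply: (L1 (lo := l0) (hi := h0) (c := (h1 - l1) * (h2 - l2) * w * c)) => //.
- move=> a; apply: integral_ge0 => b _; apply: integral_ge0 => e _;
    apply: integral_ge0 => d _; exact: f0.
- by rewrite !mulr_ge0.
- move=> a Ha; apply: (L1 (lo := l1) (hi := h1) (c := (h2 - l2) * w * c)) => //.
  + move=> b; apply: integral_ge0 => e _; apply: integral_ge0 => d _; exact: f0.
  + by rewrite !mulr_ge0.
  + move=> b Hb; apply: (L1 (lo := l2) (hi := h2) (c := w * c)) => //.
    * move=> e; apply: integral_ge0 => d _; exact: f0.
    * by rewrite !mulr_ge0.
    * move=> e He; apply: (L1 (lo := l3 a b e) (hi := l3 a b e + w) (c := c)) => //.
      -- by rewrite lerDl.
      -- by move=> d Hd; exact: H Ha Hb He Hd.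
      -- ring.
    * ring.
  + ring.
- ring.
Qed.
End LB.

Lemma Hint_ge0 (R : realType) (f : quat R -> \bar R) : (forall q, 0 <= f q)%E -> (0 <= Hint f)%E.
Proof.
move=> f0; rewrite /Hint; apply: integral_ge0 => a _; apply: integral_ge0 => b _;
  apply: integral_ge0 => e _; apply: integral_ge0 => d _; exact: f0.
Qed.

Lemma qnorm2_ge0 (R : realType) (q : quat R) : 0 <= qnorm2 q.
Proof. by rewrite /qnorm2 !addr_ge0 // sqr_ge0. Qed.

Theorem lemma4p1 (R : realType) (eps : R) (heps : eps < 1 / 6) :
  (Hint (fun z : quat R => Hint (fun y : quat R =>
      ((Phi (nyz y z)) `^ (-1 - eps))%:E)) = +oo)%E.
Proof.
set e' := maxr eps 0.
set p' := -1 - e'.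
have e'0 : 0 <= e' by rewrite /e' le_max lexx orbT.
have e'6 : e' < 1 / 6 by rewrite /e' gt_max heps /=; lra.
have pp : p' <= -1 - eps by rewrite /p' lerB // /e' le_max lexx.
have pneg : p' <= 0 by rewrite /p'; lra.
have d0 : 0 < 7 + 6 * p' by rewrite /p'; lra.
set C : R := 10 * 10 * 10 * 10 * 10.
have C0 : 0 < C by rewrite /C; lra.
set T := Hint _.
have key : forall r, 1 <= r -> ((r ^+ 7 / 10 * (C * r ^+ 6) `^ p')%:E <= T)%E.
  move=> r r1.
  have r0 : 0 <= r by apply: le_trans r1.
  set m := (C * r ^+ 6) `^ p'.
  have m0 : 0 <= m by apply: powR_ge0.
  have -> : r ^+ 7 / 10 * m = (2 * r - r) * (2 * r - r) * (2 * r - r) * r * (r ^+ 3 / 10 * m)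
    by ring.
  apply: (Hint_lb (l3 := fun _ _ _ => r)).
  - move=> q; apply: Hint_ge0 => y; exact: powR_ge0.
  - lra.
  - lra.
  - lra.
  - exact: r0.
  - by rewrite !mulr_ge0 // ?exprn_ge0 // invr_ge0.
  move=> a b e d /andP[a1 a2] /andP[b1 b2] /andP[e1 e2] /andP[d1 d2].
  set z := Quat a b e d.
  have za : 4 * r ^+ 2 <= qnorm2 z <= 16 * r ^+ 2.
    rewrite /qnorm2 /=; apply/andP; split; nra.
  have -> : r ^+ 3 / 10 * m = (r - 0) * (r - 0) * (r - 0) * (1 / 10) * m by ring.
  apply: (Hint_lb (l3 := fun y0 y1 y2 => Num.sqrt (qnorm2 z - (y0 ^+ 2 + y1 ^+ 2 + y2 ^+ 2)))).
  - move=> q; exact: powR_ge0.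
  - exact: r0.
  - exact: r0.
  - exact: r0.
  - lra.
  - exact: m0.
  move=> y0 y1 y2 y3 /andP[y01 y02] /andP[y11 y12] /andP[y21 y22] Hy3.
  rewrite lee_fin PhiE.
  set b' := qnorm2 (Quat y0 y1 y2 y3).
  have h0 : y0 ^+ 2 <= r ^+ 2 by rewrite !expr2; apply: ler_pM.
  have h1 : y1 ^+ 2 <= r ^+ 2 by rewrite !expr2; apply: ler_pM.
  have h2 : y2 ^+ 2 <= r ^+ 2 by rewrite !expr2; apply: ler_pM.
  have Sb : 0 <= y0 ^+ 2 + y1 ^+ 2 + y2 ^+ 2 <= 3 * r ^+ 2.
    have := sqr_ge0 y0; have := sqr_ge0 y1; have := sqr_ge0 y2.
    move=> *; apply/andP; split; lra.
  have bb := b_bounds r1 za Sb Hy3.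
  have eb : b' = y0 ^+ 2 + y1 ^+ 2 + y2 ^+ 2 + y3 ^+ 2 by [].
  rewrite -eb in bb.
  have Pl := PhiF_le r1 za bb.
  have P1 := PhiF_ge1 (qnorm2_ge0 z) (qnorm2_ge0 (Quat y0 y1 y2 y3)).
  rewrite -/b' in P1.
  apply: (@le_trans _ _ (PhiF (qnorm2 z) b' `^ p')); last exact: ler_powR.
  have Pp : 0 < PhiF (qnorm2 z) b' by lra.
  have Cp : 0 < C * r ^+ 6 by rewrite mulr_gt0 // exprn_gt0 // (lt_le_trans ltr01 r1).
  have q0 : 0 <= - p' by rewrite oppr_ge0.
  have ep : p' = - (- p') by rewrite opprK.
  rewrite /m [in X in _ <= X]ep [in X in X <= _]ep.
  rewrite (powRN (C * r ^+ 6)) (powRN (PhiF _ _)).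
  rewrite lef_pV2 ?posrE ?powR_gt0 //.
  apply: ge0_ler_powR; rewrite ?nnegrE //; try lra.
have H : forall M : R, (M%:E <= T)%E.
  move=> M; have [r [r1 Mr]] := growth C0 d0 M.
  by apply: le_trans (key r r1); rewrite lee_fin.
move: (H 0) (H (fine T + 1)); clear key H.
case: T => [x| |] //=.
  by move=> _ /=; rewrite lee_fin => ?; exfalso; lra.
Qed.
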